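(* Let $\mathfrak{Q}\subset\mathbb{R}^2$ be open, $\phi\colon S^1\times\mathfrak{Q}\to\mathbb{R}$ smooth ($S^1=\mathbb{R}/\mathbb{Z}$, $\phi_t:=\phi(t,\cdot)$), and $\mathbf{A}$ a twisted-periodic vector potential on $\mathfrak{Q}$ (see context). Then $$(\mathbf{A}^\phi)_t:=\mathbf{A}_t+\int_0^t\nabla\phi_s\,ds$$ is again a twisted-periodic vector potential on $\mathfrak{Q}$. Moreover, a smooth map $t\mapsto q(t)\in\mathfrak{Q}$ solves the $(\mathbf{A},\phi)$-equation $$\ddot q=-\bigl(\mathrm{rot}\,\mathbf{A}_t(q)\bigr)J_0\dot q-\dot{\mathbf{A}}_t(q)-\nabla\phi_t(q)$$ if and only if it solves the $(\mathbf{A}^\phi,0)$-equation $$\ddot q=-\bigl(\mathrm{rot}\,(\mathbf{A}^\phi)_t(q)\bigr)J_0\dot q-\dot{(\mathbf{A}^\phi)}_t(q).$$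
   Context: A twisted-periodic vector potential on $\mathfrak{Q}$ is a smooth map $\mathbf{A}\colon\mathbb{R}\times\mathfrak{Q}\to\mathbb{R}^2$, $\mathbf{A}_t=(A^1_t,A^2_t):=\mathbf{A}(t,\cdot)$, such that for all $t$: $\dot{\mathbf{A}}_{t+1}=\dot{\mathbf{A}}_t$, $\mathrm{rot}\,\mathbf{A}_{t+1}=\mathrm{rot}\,\mathbf{A}_t$, and $\mathbf{A}_{t+1}-\mathbf{A}_t=\nabla f_t$ with $f_t=f(t,\cdot)$ for some smooth $f\colon\mathbb{R}\times\mathfrak{Q}\to\mathbb{R}$. Here the dot is $\partial_t$, $\mathrm{rot}\,\mathbf{A}_t:=\partial_{q_1}A^2_t-\partial_{q_2}A^1_t$, and $J_0=\begin{pmatrix}0&-1\\1&0\end{pmatrix}$. *)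

(* Defs.v *)
From Stdlib Require Import Reals List.
From Coquelicot Require Import Coquelicot.
Open Scope R_scope.

(* A time-dependent scalar field on (an open subset of) R^2 is a curried
   function  g : R -> R -> R -> R,  g t x y  =  g(t,(x,y)). *)
Definition fld := R -> R -> R -> R.

Definition dt (g : fld) : fld := fun t x y => Derive (fun s => g s x y) t.
Definition dx (g : fld) : fld := fun t x y => Derive (fun s => g t s y) x.
Definition dy (g : fld) : fld := fun t x y => Derive (fun s => g t x s) y.

Definition dir (i : nat) : fld -> fld :=
  match i with 0 => dt | 1 => dx | _ => dy end.

Fixpoint dparts (l : list nat) (g : fld) : fld :=
  match l with nil => g | i :: l' => dir i (dparts l' g) end.

Definition uncurry3 (g : fld) : R * R * R -> R :=
  fun p => match p with (t, x, y) => g t x y end.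

Definition smooth_on (Q : R * R -> Prop) (g : fld) : Prop :=
  forall (l : list nat) (t x y : R), Q (x, y) ->
    continuous (uncurry3 (dparts l g)) (t, x, y) /\
    ex_derive (fun s => dparts l g s x y) t /\
    ex_derive (fun s => dparts l g t s y) x /\
    ex_derive (fun s => dparts l g t x s) y.

Definition smooth1 (u : R -> R) : Prop :=
  forall (n : nat) (t : R), ex_derive (Derive_n u n) t.

Definition rot (A1 A2 : fld) : fld := fun t x y => dx A2 t x y - dy A1 t x y.

Definition twisted_periodic (Q : R * R -> Prop) (A1 A2 : fld) : Prop :=
  smooth_on Q A1 /\ smooth_on Q A2 /\
  (forall t x y, Q (x, y) ->
     dt A1 (t + 1) x y = dt A1 t x y /\
     dt A2 (t + 1) x y = dt A2 t x y /\
     rot A1 A2 (t + 1) x y = rot A1 A2 t x y) /\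
  exists f : fld, smooth_on Q f /\
    forall t x y, Q (x, y) ->
      A1 (t + 1) x y - A1 t x y = dx f t x y /\
      A2 (t + 1) x y - A2 t x y = dy f t x y.

Definition Aphi1 (A1 phi : fld) : fld :=
  fun t x y => A1 t x y + RInt (fun s => dx phi s x y) 0 t.
Definition Aphi2 (A2 phi : fld) : fld :=
  fun t x y => A2 t x y + RInt (fun s => dy phi s x y) 0 t.

(* the (A,phi)-equation  q'' = -(rot A_t(q)) J0 q' - dA_t(q) - grad phi_t(q),
   with J0 (v1,v2) = (-v2, v1), written componentwise, for all times t *)
Definition solves (A1 A2 phi : fld) (q1 q2 : R -> R) : Prop :=
  forall t : R,
    Derive_n q1 2 t =
      rot A1 A2 t (q1 t) (q2 t) * Derive q2 t
      - dt A1 t (q1 t) (q2 t) - dx phi t (q1 t) (q2 t) /\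
    Derive_n q2 2 t =
      - (rot A1 A2 t (q1 t) (q2 t) * Derive q1 t)
      - dt A2 t (q1 t) (q2 t) - dy phi t (q1 t) (q2 t).

Definition zero_fld : fld := fun _ _ _ => 0.

(* Main.v *)
Require Import Defs.
From Stdlib Require Import Reals.
From Coquelicot Require Import Coquelicot.
From Stdlib Require Import Lra List FunctionalExtensionality ClassicalEpsilon.
Open Scope R_scope.

Definition cont3 (g : fld) t x y := forall eps : posreal, exists d : posreal,
  forall t' x' y', Rabs (t' - t) < d -> Rabs (x' - x) < d -> Rabs (y' - y) < d ->
   Rabs (g t' x' y' - g t x y) < eps.

Lemma cont3_iff g t x y : continuous (uncurry3 g) (t, x, y) <-> cont3 g t x y.
Proof.
  unfold continuous. rewrite filterlim_locally. split.
  - intros H eps. destruct (H eps) as [d Hd]. exists d. intros t' x' y' H1 H2 H3.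
    apply (Hd (t', x', y')). split; [split|]; assumption.
  - intros H eps. destruct (H eps) as [d Hd]. exists d. intros [[t' x'] y'] [[H1 H2] H3].
    apply (Hd t' x' y'); assumption.
Qed.

Lemma locR (x : R) (P : R -> Prop) : (exists r : posreal, forall u, Rabs (u - x) < r -> P u) -> locally x P.
Proof. intros [r Hr]. exists r. intros u Hu. apply Hr. exact Hu. Qed.

Lemma locR_inv (x : R) (P : R -> Prop) : locally x P -> exists r : posreal, forall u, Rabs (u - x) < r -> P u.
Proof. intros [r Hr]. exists r. intros u Hu. apply Hr. exact Hu. Qed.

Lemma dparts_app l1 l2 g : dparts (l1 ++ l2) g = dparts l1 (dparts l2 g).
Proof. induction l1; simpl; [reflexivity| rewrite IHl1; reflexivity]. Qed.

Lemma Rabs0lt (r : posreal) : Rabs 0 < r.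
Proof. rewrite Rabs_R0. apply cond_pos. Qed.
Lemma Rabs0lt2 (r : posreal) y : Rabs (y - y) < r.
Proof. unfold Rminus. rewrite Rplus_opp_r. apply Rabs0lt. Qed.

Section Infra.
Variable Q : R * R -> Prop.
Hypothesis HQ : open Q.

Lemma open_ball x y : Q (x, y) ->
  exists r : posreal, forall x' y', Rabs (x' - x) < r -> Rabs (y' - y) < r -> Q (x', y').
Proof.
  intros Hq. destruct (HQ _ Hq) as [r Hr]. exists r. intros x' y' H1 H2.
  apply Hr. split; assumption.
Qed.

Definition eqQ (F H : fld) := forall t x y, Q (x, y) -> F t x y = H t x y.

Lemma locx (P : R -> Prop) x y : (forall u, Q (u, y) -> P u) -> Q (x, y) -> locally x P.
Proof.
  intros HP Hq. destruct (open_ball x y Hq) as [r Hr]. apply locR. exists r.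
  intros u Hu. apply HP, Hr; [exact Hu| apply Rabs0lt2]. 
Qed.

Lemma locy (P : R -> Prop) x y : (forall u, Q (x, u) -> P u) -> Q (x, y) -> locally y P.
Proof.
  intros HP Hq. destruct (open_ball x y Hq) as [r Hr]. apply locR. exists r.
  intros u Hu. apply HP, Hr; [apply Rabs0lt2 | exact Hu]. 
Qed.

Lemma dir_ext i F H : eqQ F H -> eqQ (dir i F) (dir i H).
Proof.
  intros E t x y Hq. destruct i as [|[|i]]; simpl; unfold dt, dx, dy.
  - apply Derive_ext. intros s. apply E, Hq.
  - apply Derive_ext_loc. apply (locx _ x y); [|exact Hq]. intros u Hu. apply E, Hu.
  - apply Derive_ext_loc. apply (locy _ x y); [|exact Hq]. intros u Hu. apply E, Hu.
Qed.

Lemma dparts_ext l F H : eqQ F H -> eqQ (dparts l F) (dparts l H).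
Proof. intros E. induction l; simpl; [exact E| apply dir_ext, IHl]. Qed.

Definition good (g : fld) := forall t x y, Q (x, y) -> cont3 g t x y /\
  ex_derive (fun s => g s x y) t /\ ex_derive (fun s => g t s y) x /\ ex_derive (fun s => g t x s) y.

Lemma smooth_good g : smooth_on Q g <-> forall l, good (dparts l g).
Proof.
  split.
  - intros H l t x y Hq. destruct (H l t x y Hq) as [H1 H2]. rewrite <- cont3_iff. split; assumption.
  - intros H l t x y Hq. destruct (H l t x y Hq) as [H1 H2]. rewrite cont3_iff. split; assumption.
Qed.

Lemma good_ext F H : eqQ F H -> good H -> good F.
Proof.
  intros E G t x y Hq. destruct (G t x y Hq) as [C [D1 [D2 D3]]].
  split; [|split; [|split]].
  - intros eps. destruct (C eps) as [d Hd]. destruct (open_ball x y Hq) as [r Hr].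
    exists (mkposreal _ (Rmin_pos _ _ (cond_pos d) (cond_pos r))). simpl.
    intros t' x' y' H1 H2 H3.
    pose proof (Rmin_l d r). pose proof (Rmin_r d r).
    assert (Q (x', y')) by (apply Hr; lra).
    rewrite (E t' x' y'), (E t x y) by assumption.
    apply Hd; lra.
  - apply (ex_derive_ext (fun s => H s x y)); [intros; symmetry; apply E, Hq| exact D1].
  - apply (ex_derive_ext_loc (fun s => H t s y)); [|exact D2].
    apply (locx _ x y); [|exact Hq]. intros u Hu; symmetry; apply E, Hu.
  - apply (ex_derive_ext_loc (fun s => H t x s)); [|exact D3].
    apply (locy _ x y); [|exact Hq]. intros u Hu; symmetry; apply E, Hu.
Qed.

Lemma smooth_ext F H : eqQ F H -> smooth_on Q H -> smooth_on Q F.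
Proof.
  rewrite !smooth_good. intros E S l. apply (good_ext _ (dparts l H)); [apply dparts_ext, E| apply S].
Qed.

Lemma smooth_dparts l g : smooth_on Q g -> smooth_on Q (dparts l g).
Proof.
  rewrite !smooth_good. intros S l'. rewrite <- dparts_app. apply S.
Qed.

Definition fplus (F H : fld) : fld := fun t x y => F t x y + H t x y.
Definition fscal (c : R) (F : fld) : fld := fun t x y => c * F t x y.
Definition fshift (c : R) (F : fld) : fld := fun t x y => F (t + c) x y.

Lemma good_plus F H : good F -> good H -> good (fplus F H).
Proof.
  intros GF GH t x y Hq. destruct (GF t x y Hq) as [C [D1 [D2 D3]]].
  destruct (GH t x y Hq) as [C' [D1' [D2' D3']]]. unfold fplus.
  split; [|split; [|split]]; try (apply (ex_derive_plus _ _ _); assumption).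
  intros eps. destruct (C (pos_div_2 eps)) as [d Hd]. destruct (C' (pos_div_2 eps)) as [d' Hd'].
  exists (mkposreal _ (Rmin_pos _ _ (cond_pos d) (cond_pos d'))). simpl.
  intros t' x' y' H1 H2 H3.
  pose proof (Rmin_l d d'). pose proof (Rmin_r d d').
  specialize (Hd t' x' y'). specialize (Hd' t' x' y'). simpl in Hd, Hd'.
  eapply Rle_lt_trans. 2: { assert (Rabs (F t' x' y' - F t x y) < eps / 2) by (apply Hd; lra).
    assert (Rabs (H t' x' y' - H t x y) < eps / 2) by (apply Hd'; lra).
    instantiate (1 := Rabs (F t' x' y' - F t x y) + Rabs (H t' x' y' - H t x y)). lra. }
  replace (F t' x' y' + H t' x' y' - (F t x y + H t x y)) with
     ((F t' x' y' - F t x y) + (H t' x' y' - H t x y)) by ring.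
  apply Rabs_triang.
  - apply (ex_derive_plus (fun s => F s x y) (fun s => H s x y)); assumption.
  - apply (ex_derive_plus (fun s => F t s y) (fun s => H t s y)); assumption.
  - apply (ex_derive_plus (fun s => F t x s) (fun s => H t x s)); assumption.
Qed.

Lemma good_scal c F : good F -> good (fscal c F).
Proof.
  intros GF t x y Hq. destruct (GF t x y Hq) as [C [D1 [D2 D3]]]. unfold fscal.
  split; [|split; [|split]]; try (apply ex_derive_scal; assumption).
  intros eps.
  assert (Hp : 0 < eps / (Rabs c + 1)). { apply Rdiv_lt_0_compat; [apply cond_pos| pose proof (Rabs_pos c); lra]. }
  destruct (C (mkposreal _ Hp)) as [d Hd]. exists d. intros t' x' y' H1 H2 H3.
  specialize (Hd t' x' y' H1 H2 H3). simpl in Hd.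
  rewrite <- Rmult_minus_distr_l, Rabs_mult.
  pose proof (Rabs_pos c). pose proof (Rabs_pos (F t' x' y' - F t x y)).
  apply Rle_lt_trans with (Rabs c * (eps / (Rabs c + 1))).
  { apply Rmult_le_compat_l; lra. }
  pose proof (cond_pos eps).
  apply Rlt_le_trans with ((Rabs c + 1) * (eps / (Rabs c + 1))).
  { apply Rmult_lt_compat_r; [exact Hp| lra]. }
  right. field. lra.
Qed.

Lemma Derive_shift (f : R -> R) c t : Derive (fun s => f (s + c)) t = Derive f (t + c).
Proof.
  unfold Derive. f_equal. apply Lim_ext. intros h. unfold Rdiv. f_equal. f_equal. f_equal. ring.
Qed.

Lemma dparts_shift l c F : dparts l (fshift c F) = fshift c (dparts l F).
Proof.
  induction l as [|i l IH]; simpl; [reflexivity|]. rewrite IH. unfold fshift.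
  destruct i as [|[|i]]; simpl; unfold dt, dx, dy; try reflexivity.
  apply functional_extensionality; intro t. apply functional_extensionality; intro x.
  apply functional_extensionality; intro y. apply (Derive_shift (fun s => dparts l F s x y)).
Qed.

Lemma dparts_plus l F H : smooth_on Q F -> smooth_on Q H ->
  eqQ (dparts l (fplus F H)) (fplus (dparts l F) (dparts l H)).
Proof.
  rewrite !smooth_good. intros SF SH. induction l as [|i l IH]; simpl.
  - intros t x y _. reflexivity.
  - intros t x y Hq. rewrite (dir_ext i _ _ IH t x y Hq).
    destruct (SF l t x y Hq) as [_ [D1 [D2 D3]]]. destruct (SH l t x y Hq) as [_ [D1' [D2' D3']]].
    unfold fplus. destruct i as [|[|i]]; simpl; unfold dt, dx, dy; apply Derive_plus; assumption.
Qed.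

Lemma dparts_scal l c F : smooth_on Q F -> eqQ (dparts l (fscal c F)) (fscal c (dparts l F)).
Proof.
  rewrite !smooth_good. intros SF. induction l as [|i l IH]; simpl.
  - intros t x y _. reflexivity.
  - intros t x y Hq. rewrite (dir_ext i _ _ IH t x y Hq).
    unfold fscal. destruct i as [|[|i]]; simpl; unfold dt, dx, dy; apply Derive_scal.
Qed.

Lemma smooth_plus F H : smooth_on Q F -> smooth_on Q H -> smooth_on Q (fplus F H).
Proof.
  intros SF SH. pose proof SF as SF'. pose proof SH as SH'. rewrite smooth_good in SF, SH |- *. intros l.
  apply (good_ext _ _ (dparts_plus l F H SF' SH')). apply good_plus; auto.
Qed.

Lemma smooth_scal c F : smooth_on Q F -> smooth_on Q (fscal c F).
Proof.
  intros SF. pose proof SF as SF'. rewrite smooth_good in SF |- *. intros l.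
  apply (good_ext _ _ (dparts_scal l c F SF')). apply good_scal; auto.
Qed.

Lemma smooth_shift c F : smooth_on Q F -> smooth_on Q (fshift c F).
Proof.
  rewrite !smooth_good. intros SF l. rewrite dparts_shift. intros t x y Hq.
  destruct (SF l (t + c) x y Hq) as [C [D1 [D2 D3]]]. unfold fshift.
  split; [|split; [|split]]; try assumption.
  - intros eps. destruct (C eps) as [d Hd]. exists d. intros t' x' y' H1 H2 H3. apply Hd; auto.
    replace (t' + c - (t + c)) with (t' - t) by ring. exact H1.
  - apply (ex_derive_comp (fun s => dparts l F s x y) (fun s => s + c)); [exact D1|].
    apply (ex_derive_plus (fun s => s) (fun _ => c)); [apply ex_derive_id| apply ex_derive_const].
Qed.

End Infra.

Lemma abs_RInt_gen (f : R -> R) a b M : ex_RInt f a b ->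
  (forall s, Rmin a b <= s <= Rmax a b -> Rabs (f s) <= M) -> Rabs (RInt f a b) <= Rabs (b - a) * M.
Proof.
  intros E H. destruct (Rle_or_lt a b) as [Hab|Hab].
  - rewrite (Rabs_pos_eq (b - a)) by lra. apply abs_RInt_le_const; auto.
    intros s Hs. apply H. rewrite Rmin_left, Rmax_right; lra.
  - rewrite <- (opp_RInt_swap f b a) by (apply ex_RInt_swap; exact E).
    change (Rabs (- RInt f b a) <= Rabs (b - a) * M). rewrite Rabs_Ropp.
    rewrite (Rabs_left (b - a)) by lra. replace (- (b - a)) with (a - b) by ring.
    apply abs_RInt_le_const; [lra| apply ex_RInt_swap; exact E|].
    intros s Hs. apply H. rewrite Rmin_right, Rmax_left; lra.
Qed.

Lemma cont1_eps (f : R -> R) t : continuous f t -> forall eps : posreal, exists d : posreal,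
  forall t', Rabs (t' - t) < d -> Rabs (f t' - f t) < eps.
Proof.
  intros C eps. unfold continuous in C. rewrite filterlim_locally in C.
  destruct (locR_inv _ _ (C eps)) as [d Hd]. exists d. intros t' Ht. exact (Hd t' Ht).
Qed.

Definition Gi (g : fld) : fld := fun t x y => RInt (fun s => g s x y) 0 t.

Section Param.
Variable Q : R * R -> Prop.
Hypothesis HQ : open Q.

Lemma good_conts h x y s : good Q h -> Q (x, y) -> continuous (fun s => h s x y) s.
Proof. intros G Hq. apply (ex_derive_continuous (K := R_AbsRing) (V := R_NormedModule)). apply (G s x y Hq). Qed.

Lemma good_exRInt h x y a b : good Q h -> Q (x, y) -> ex_RInt (fun s => h s x y) a b.
Proof. intros G Hq. apply (ex_RInt_continuous (V := R_CompleteNormedModule)). intros z _. apply good_conts; auto. Qed.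

Lemma Gi_dt h t x y : good Q h -> Q (x, y) -> is_derive (fun s => Gi h s x y) t (h t x y).
Proof.
  intros G Hq. unfold Gi. apply (is_derive_RInt (V := R_CompleteNormedModule) (fun s => h s x y) _ 0).
  - apply filter_forall. intros b. apply RInt_correct, good_exRInt; auto.
  - apply good_conts; auto.
Qed.

Lemma Gi_dx h t x y : good Q h -> good Q (dx h) -> Q (x, y) ->
  is_derive (fun u => Gi h t u y) x (Gi (dx h) t x y).
Proof.
  intros G G' Hq. unfold Gi, dx.
  apply (is_derive_RInt_param (fun u s => h s u y) 0 t x).
  - apply (locx Q HQ _ x y); [|exact Hq]. intros u Hu s _. apply (G s u y Hu).
  - intros s _ eps. destruct (proj1 (G' s x y Hq) eps) as [d Hd]. exists d.
    intros u v Hu Hv. apply Hd; auto. apply Rabs0lt2.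
  - apply (locx Q HQ _ x y); [|exact Hq]. intros u Hu. apply good_exRInt; auto.
Qed.

Lemma Gi_dy h t x y : good Q h -> good Q (dy h) -> Q (x, y) ->
  is_derive (fun u => Gi h t x u) y (Gi (dy h) t x y).
Proof.
  intros G G' Hq. unfold Gi, dy.
  apply (is_derive_RInt_param (fun u s => h s x u) 0 t y).
  - apply (locy Q HQ _ x y); [|exact Hq]. intros u Hu s _. apply (G s x u Hu).
  - intros s _ eps. destruct (proj1 (G' s x y Hq) eps) as [d Hd]. exists d.
    intros u v Hu Hv. apply Hd; auto. apply Rabs0lt2.
  - apply (locy Q HQ _ x y); [|exact Hq]. intros u Hu. apply good_exRInt; auto.
Qed.

Lemma unif h x y a b : good Q h -> Q (x, y) -> forall eps : posreal, exists d : posreal,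
  forall s x' y', a <= s <= b -> Rabs (x' - x) < d -> Rabs (y' - y) < d ->
    Rabs (h s x' y' - h s x y) < eps.
Proof.
  intros G Hq eps.
  assert (Hc : forall s, exists d : posreal, forall t' x' y', Rabs (t' - s) < d -> Rabs (x' - x) < d ->
     Rabs (y' - y) < d -> Rabs (h t' x' y' - h s x y) < pos_div_2 eps).
  { intros s. apply (proj1 (G s x y Hq)). }
  set (delta := fun s => proj1_sig (constructive_indefinite_description _ (Hc s))).
  assert (Hdel : forall s t' x' y', Rabs (t' - s) < delta s -> Rabs (x' - x) < delta s ->
     Rabs (y' - y) < delta s -> Rabs (h t' x' y' - h s x y) < pos_div_2 eps).
  { intros s. unfold delta. destruct (constructive_indefinite_description _ (Hc s)) as [d Hd]. exact Hd. }
  destruct (compactness_value_1d a b delta) as [d Hd]. exists d.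
  intros s x' y' Hs Hx Hy.
  destruct (Rlt_dec (Rabs (h s x' y' - h s x y)) eps) as [ok|ko]; [exact ok|].
  exfalso. apply (Hd s Hs). intros [s0 [Hs0 [H1 H2]]]. apply ko.
  assert (A1 : Rabs (h s x' y' - h s0 x y) < pos_div_2 eps) by (apply Hdel; lra).
  assert (A2 : Rabs (h s x y - h s0 x y) < pos_div_2 eps).
  { apply Hdel; try lra; rewrite Rminus_diag, Rabs_R0; apply cond_pos. }
  simpl in A1, A2.
  replace (h s x' y' - h s x y) with ((h s x' y' - h s0 x y) - (h s x y - h s0 x y)) by ring.
  eapply Rle_lt_trans; [apply Rabs_triang|]. rewrite Rabs_Ropp. lra.
Qed.

Lemma Gi_cont h t x y : good Q h -> Q (x, y) -> cont3 (Gi h) t x y.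
Proof.
  intros G Hq eps.
  set (M := Rabs t + 1).
  assert (HM : 0 < M) by (unfold M; pose proof (Rabs_pos t); lra).
  assert (He : 0 < eps / (2 * M)) by (apply Rdiv_lt_0_compat; [apply cond_pos| lra]).
  destruct (unif h x y (Rmin 0 t - 1) (Rmax 0 t + 1) G Hq (mkposreal _ He)) as [d1 H1].
  destruct (cont1_eps (fun s => Gi h s x y) t (ex_derive_continuous _ _ (ex_intro _ _ (Gi_dt h t x y G Hq)))
     (pos_div_2 eps)) as [d2 H2].
  destruct (open_ball Q HQ x y Hq) as [r Hr].
  assert (Hd : 0 < Rmin (Rmin d1 d2) (Rmin r 1)).
  { repeat apply Rmin_pos; try apply cond_pos; lra. }
  exists (mkposreal _ Hd). simpl. intros t' x' y' Ht Hx Hy.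
  pose proof (Rmin_l (Rmin d1 d2) (Rmin r 1)). pose proof (Rmin_r (Rmin d1 d2) (Rmin r 1)).
  pose proof (Rmin_l d1 d2). pose proof (Rmin_r d1 d2). pose proof (Rmin_l r 1). pose proof (Rmin_r r 1).
  assert (Hq' : Q (x', y')) by (apply Hr; lra).
  assert (E : Gi h t' x' y' - Gi h t x y =
     RInt (fun s => h s x' y' - h s x y) 0 t' + (Gi h t' x y - Gi h t x y)).
  { unfold Gi. rewrite (RInt_minus (fun s => h s x' y') (fun s => h s x y)) by (apply good_exRInt; auto).
    change (RInt (fun s : R => h s x' y') 0 t' - RInt (fun s : R => h s x y) 0 t = 
      RInt (fun s : R => h s x' y') 0 t' - RInt (fun s : R => h s x y) 0 t' +
      (RInt (fun s : R => h s x y) 0 t' - RInt (fun s : R => h s x y) 0 t)). ring. }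
  rewrite E. eapply Rle_lt_trans; [apply Rabs_triang|].
  assert (B2 : Rabs (Gi h t' x y - Gi h t x y) < eps / 2) by (apply (H2 t'); lra).
  assert (B1 : Rabs (RInt (fun s => h s x' y' - h s x y) 0 t') <= Rabs (t' - 0) * (eps / (2 * M))).
  { apply abs_RInt_gen.
    - apply (ex_RInt_minus (fun s => h s x' y') (fun s => h s x y)); apply good_exRInt; auto.
    - intros s Hs. left. apply H1; try lra.
      assert (H9 : Rabs (t' - t) < 1) by lra.
      assert (Rmin 0 t' >= Rmin 0 t - 1 /\ Rmax 0 t' <= Rmax 0 t + 1).
      { apply Rabs_def2 in H9. destruct H9. unfold Rmin, Rmax.
        repeat destruct Rle_dec; lra. }
      lra. }
  assert (Rabs (t' - 0) <= M).
  { unfold M. rewrite Rminus_0_r. assert (Rabs (t' - t) < 1) by lra.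
    pose proof (Rabs_triang_inv t' t). lra. }
  assert (Rabs (t' - 0) * (eps / (2 * M)) <= M * (eps / (2 * M))).
  { apply Rmult_le_compat_r; lra. }
  assert (M * (eps / (2 * M)) = eps / 2) by (field; lra).
  lra.
Qed.

End Param.

Section Main.
Variable Q : R * R -> Prop.
Hypothesis HQ : open Q.

Lemma sm_good l h : smooth_on Q h -> good Q (dparts l h).
Proof. intros S. exact (proj1 (smooth_good Q h) S l). Qed.

Lemma sm_good0 h : smooth_on Q h -> good Q h.
Proof. intros S. exact (sm_good nil h S). Qed.

Lemma Gi_good h : smooth_on Q h -> good Q (Gi h).
Proof.
  intros S t x y Hq. split; [|split; [|split]].
  - apply (Gi_cont Q HQ); auto. apply sm_good0; auto.
  - eexists. apply (Gi_dt Q); auto. apply sm_good0; auto.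
  - eexists. apply (Gi_dx Q HQ); auto. apply sm_good0; auto. apply (sm_good (1%nat :: nil)); auto.
  - eexists. apply (Gi_dy Q HQ); auto. apply sm_good0; auto. apply (sm_good (2%nat :: nil)); auto.
Qed.

Lemma Gi_dir i h : smooth_on Q h ->
  exists h', smooth_on Q h' /\ (eqQ Q (dir i (Gi h)) h' \/ eqQ Q (dir i (Gi h)) (Gi h')).
Proof.
  intros S. destruct i as [|[|i]]; simpl.
  - exists h. split; auto. left. intros t x y Hq. unfold dt. apply is_derive_unique.
    apply (Gi_dt Q); auto. apply sm_good0; auto.
  - exists (dx h). split; [apply (smooth_dparts Q (1%nat :: nil)); auto|]. right. intros t x y Hq.
    unfold dx at 1. apply is_derive_unique. apply (Gi_dx Q HQ); auto. apply sm_good0; auto.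
    apply (sm_good (1%nat :: nil)); auto.
  - exists (dy h). split; [apply (smooth_dparts Q (2%nat :: nil)); auto|]. right. intros t x y Hq.
    unfold dy at 1. apply is_derive_unique. apply (Gi_dy Q HQ); auto. apply sm_good0; auto.
    apply (sm_good (2%nat :: nil)); auto.
Qed.

Lemma eqQ_trans F G H : eqQ Q F G -> eqQ Q G H -> eqQ Q F H.
Proof. intros A B t x y Hq. rewrite A, B; auto. Qed.

Lemma smooth_Gi h : smooth_on Q h -> smooth_on Q (Gi h).
Proof.
  intros S.
  assert (K : forall l g, smooth_on Q g -> exists h', smooth_on Q h' /\
     (eqQ Q (dparts l (Gi g)) h' \/ eqQ Q (dparts l (Gi g)) (Gi h'))).
  { induction l as [|i l IH]; intros g Sg; simpl.
    - exists g. split; auto. right. intros t x y _. reflexivity.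
    - destruct (IH g Sg) as [h1 [S1 [E1|E1]]].
      + exists (dir i h1). split; [apply (smooth_dparts Q (i :: nil)); auto|].
        left. apply (dir_ext Q HQ); auto.
      + destruct (Gi_dir i h1 S1) as [h2 [S2 [E2|E2]]].
        * exists h2. split; auto. left. eapply eqQ_trans; [apply (dir_ext Q HQ); eauto| exact E2].
        * exists h2. split; auto. right. eapply eqQ_trans; [apply (dir_ext Q HQ); eauto| exact E2]. }
  apply smooth_good. intros l. destruct (K l h S) as [h' [S' [E|E]]].
  - eapply (good_ext Q HQ); eauto. apply sm_good0; auto.
  - eapply (good_ext Q HQ); eauto. apply Gi_good; auto.
Qed.

Lemma schwarz_sm g t x y : smooth_on Q g -> Q (x, y) -> dx (dy g) t x y = dy (dx g) t x y.
Proof.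
  intros S Hq. unfold dx at 1. unfold dy at 2.
  apply (Schwarz (fun u v => g t u v) x y).
  - destruct (open_ball Q HQ x y Hq) as [r Hr]. exists r. intros u v Hu Hv.
    assert (Q (u, v)) by (apply Hr; auto).
    destruct (sm_good0 g S t u v H) as [_ [_ [A B]]].
    destruct (sm_good (2%nat :: nil) g S t u v H) as [_ [_ [C _]]].
    destruct (sm_good (1%nat :: nil) g S t u v H) as [_ [_ [_ D]]].
    repeat split; assumption.
  - intros eps. destruct (proj1 (sm_good (1%nat :: 2%nat :: nil) g S t x y Hq) eps) as [d Hd].
    exists d. intros u v Hu Hv. apply (Hd t u v); auto. apply Rabs0lt2.
  - intros eps. destruct (proj1 (sm_good (2%nat :: 1%nat :: nil) g S t x y Hq) eps) as [d Hd].
    exists d. intros u v Hu Hv. apply (Hd t u v); auto. apply Rabs0lt2.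
Qed.

End Main.

Theorem lemma3p7 (Q : R * R -> Prop) (phi A1 A2 : fld) :
  open Q ->
  smooth_on Q phi ->
  (forall t x y, Q (x, y) -> phi (t + 1) x y = phi t x y) ->
  twisted_periodic Q A1 A2 ->
  twisted_periodic Q (Aphi1 A1 phi) (Aphi2 A2 phi) /\
  (forall q1 q2 : R -> R,
     smooth1 q1 -> smooth1 q2 -> (forall t, Q (q1 t, q2 t)) ->
     (solves A1 A2 phi q1 q2 <->
      solves (Aphi1 A1 phi) (Aphi2 A2 phi) zero_fld q1 q2)).
Proof.
  intros HQ Sphi Pphi [SA1 [SA2 [PA [f [Sf Hf]]]]].
  assert (Sdx : smooth_on Q (dx phi)) by exact (smooth_dparts Q (1%nat :: nil) phi Sphi).
  assert (Sdy : smooth_on Q (dy phi)) by exact (smooth_dparts Q (2%nat :: nil) phi Sphi).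
  assert (E1 : Aphi1 A1 phi = fplus A1 (Gi (dx phi))) by reflexivity.
  assert (E2 : Aphi2 A2 phi = fplus A2 (Gi (dy phi))) by reflexivity.
  pose proof (sm_good0 Q _ SA1) as GA1. pose proof (sm_good0 Q _ SA2) as GA2.
  pose proof (sm_good0 Q _ Sdx) as Gdx. pose proof (sm_good0 Q _ Sdy) as Gdy.
  pose proof (sm_good0 Q _ Sphi) as Gphi.
  pose proof (sm_good0 Q _ (smooth_dparts Q (1%nat :: nil) _ Sdx)) as Gdxdx.
  pose proof (sm_good0 Q _ (smooth_dparts Q (2%nat :: nil) _ Sdx)) as Gdydx.
  pose proof (sm_good0 Q _ (smooth_dparts Q (1%nat :: nil) _ Sdy)) as Gdxdy.
  pose proof (sm_good0 Q _ (smooth_dparts Q (2%nat :: nil) _ Sdy)) as Gdydy.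
  simpl in Gdxdx, Gdydx, Gdxdy, Gdydy.
  assert (K1 : forall t x y, Q (x, y) -> dt (Aphi1 A1 phi) t x y = dt A1 t x y + dx phi t x y).
  { intros t x y Hq. rewrite E1. unfold dt, fplus.
    rewrite Derive_plus; [| apply (GA1 t x y Hq) | eexists; apply (Gi_dt Q); eauto].
    f_equal. apply is_derive_unique. apply (Gi_dt Q); auto. }
  assert (K2 : forall t x y, Q (x, y) -> dt (Aphi2 A2 phi) t x y = dt A2 t x y + dy phi t x y).
  { intros t x y Hq. rewrite E2. unfold dt, fplus.
    rewrite Derive_plus; [| apply (GA2 t x y Hq) | eexists; apply (Gi_dt Q); eauto].
    f_equal. apply is_derive_unique. apply (Gi_dt Q); auto. }
  assert (K3 : forall t x y, Q (x, y) -> rot (Aphi1 A1 phi) (Aphi2 A2 phi) t x y = rot A1 A2 t x y).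
  { intros t x y Hq. rewrite E1, E2.
    assert (X1 : dx (fplus A2 (Gi (dy phi))) t x y = dx A2 t x y + Gi (dx (dy phi)) t x y).
    { unfold dx at 1. unfold fplus.
      rewrite Derive_plus; [| apply (GA2 t x y Hq) | eexists; apply (Gi_dx Q HQ); eauto].
      f_equal. apply is_derive_unique. apply (Gi_dx Q HQ); auto. }
    assert (X2 : dy (fplus A1 (Gi (dx phi))) t x y = dy A1 t x y + Gi (dy (dx phi)) t x y).
    { unfold dy at 1. unfold fplus.
      rewrite Derive_plus; [| apply (GA1 t x y Hq) | eexists; apply (Gi_dy Q HQ); eauto].
      f_equal. apply is_derive_unique. apply (Gi_dy Q HQ); auto. }
    assert (Gi (dx (dy phi)) t x y = Gi (dy (dx phi)) t x y).
    { unfold Gi. apply RInt_ext. intros s _. apply (schwarz_sm Q HQ); auto. }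
    unfold rot. rewrite X1, X2. lra. }
  split.
  - split; [|split; [|split]].
    + rewrite E1. apply (smooth_plus Q HQ); auto. apply (smooth_Gi Q HQ); auto.
    + rewrite E2. apply (smooth_plus Q HQ); auto. apply (smooth_Gi Q HQ); auto.
    + intros t x y Hq. destruct (PA t x y Hq) as [P1 [P2 P3]].
      rewrite !K1, !K2, !K3 by exact Hq.
      assert (Dx : dx phi (t + 1) x y = dx phi t x y).
      { unfold dx. apply Derive_ext_loc. apply (locx Q HQ _ x y); [|exact Hq].
        intros u Hu. apply Pphi, Hu. }
      assert (Dy : dy phi (t + 1) x y = dy phi t x y).
      { unfold dy. apply Derive_ext_loc. apply (locy Q HQ _ x y); [|exact Hq].
        intros u Hu. apply Pphi, Hu. }
      rewrite P1, P2, P3, Dx, Dy. auto.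
    + exists (fplus f (fplus (fshift 1 (Gi phi)) (fscal (-1) (Gi phi)))). split.
      * apply (smooth_plus Q HQ); auto. apply (smooth_plus Q HQ).
        -- apply (smooth_shift Q). apply (smooth_Gi Q HQ); auto.
        -- apply (smooth_scal Q HQ). apply (smooth_Gi Q HQ); auto.
      * intros t x y Hq. destruct (Hf t x y Hq) as [F1 F2].
        assert (Ix : forall s, is_derive (fun u => Gi phi s u y) x (Gi (dx phi) s x y)).
        { intros s. apply (Gi_dx Q HQ); auto. }
        assert (Iy : forall s, is_derive (fun u => Gi phi s x u) y (Gi (dy phi) s x y)).
        { intros s. apply (Gi_dy Q HQ); auto. }
        unfold fplus, fshift, fscal, dx, dy. split.
        -- rewrite Derive_plus; [| apply (sm_good0 Q _ Sf t x y Hq) |].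
           2: { apply (ex_derive_plus (fun u => Gi phi (t + 1) u y) (fun u => -1 * Gi phi t u y)).
                eexists; apply Ix. apply ex_derive_scal. eexists; apply Ix. }
           rewrite Derive_plus; [| eexists; apply Ix | apply ex_derive_scal; eexists; apply Ix].
           rewrite Derive_scal. rewrite !(is_derive_unique _ _ _ (Ix _)).
           unfold dx in F1. rewrite <- F1. rewrite E1. unfold fplus, Gi. ring.
        -- rewrite Derive_plus; [| apply (sm_good0 Q _ Sf t x y Hq) |].
           2: { apply (ex_derive_plus (fun u => Gi phi (t + 1) x u) (fun u => -1 * Gi phi t x u)).
                eexists; apply Iy. apply ex_derive_scal. eexists; apply Iy. }
           rewrite Derive_plus; [| eexists; apply Iy | apply ex_derive_scal; eexists; apply Iy].
           rewrite Derive_scal. rewrite !(is_derive_unique _ _ _ (Iy _)).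
           change (Derive (f t x) y) with (dy f t x y). rewrite <- F2. rewrite E2. unfold fplus, Gi. ring.
  - intros q1 q2 _ _ Hqt.
    assert (Z1 : forall t x y, dx zero_fld t x y = 0) by (intros; unfold dx, dy, zero_fld; apply Derive_const).
    assert (Z2 : forall t x y, dy zero_fld t x y = 0) by (intros; unfold dx, dy, zero_fld; apply Derive_const).
    unfold solves. split; intros H t; specialize (H t); pose proof (Hqt t) as Hq;
      rewrite K1, K2, K3, Z1, Z2 in * by exact Hq; destruct H as [H1 H2]; split; lra.
Qed.
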